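(* There is an absolute constant $C$ such that for every tree $T$ (in the sense of the context), every $j\in\mathcal{J}(T)$ and every $0\le t\le1$, $$|I_T(t,j)|\le (Ct)^{|T^0|/2}\prod_{v\in T^0}\langle\sigma(j,v)\rangle^{-1/2}.$$
   Context: A tree is a finite rooted tree in which every node has either zero or three children; the children of a node $v$ with three children are denoted $v_1,v_2,v_3$. $T^0$ is the set of non-terminal nodes and $T^\infty$ the set of terminal nodes. For nodes, $v<w$ means $v$ is a (strict) descendant of $w$. $\mathcal{J}(T)$ is the set of $j\in\mathbb{Z}^T$ such that for every $v\in T^0$, $j_v=j_{v_1}+j_{v_2}+j_{v_3}$ and either $j_{v_i}\neq j_v$ for all $i=1,2,3$, or $j_{v_1}=-j_{v_2}=j_{v_3}=j_v$. Let $\sigma(n_1,n_2,n_3)=(n_1+n_2+n_3)^3-n_1^3-n_2^3-n_3^3=3(n_1+n_2)(n_2+n_3)(n_3+n_1)$, and for $v\in T^0$, $\sigma(j,v)=\sigma(j_{v_1},j_{v_2},j_{v_3})$. $\langle x\rangle=(1+x^2)^{1/2}$. $\mathcal{R}(T,t)=\{s\in\mathbb{R}_+^{T^0}: 0\le s_v\le s_w\le t\text{ whenever }v<w\}$, $c(j,s)=\prod_{v\in T^0}e^{i\sigma(j,v)s_v}$, and $I_T(t,j)=\int_{\mathcal{R}(T,t)}c(j,s)\,ds$. *)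

(* Defs.v *)
From Stdlib Require Import Reals Lra ZArith ClassicalEpsilon.
Open Scope R_scope.

(** Ternary trees whose nodes carry an integer label: a tree T together with
    j : Z^T.  [LLeaf z] is a terminal node with j-value z; [LNode z a b c] is a
    non-terminal node v with j_v = z and children v1 = a, v2 = b, v3 = c. *)
Inductive ltree : Type :=
| LLeaf : Z -> ltree
| LNode : Z -> ltree -> ltree -> ltree -> ltree.

Definition lab (t : ltree) : Z :=
  match t with LLeaf z => z | LNode z _ _ _ => z end.

Fixpoint n_int (t : ltree) : nat :=
  match t with
  | LLeaf _ => 0
  | LNode _ a b c => S (n_int a + n_int b + n_int c)
  end.

Definition sigma (n1 n2 n3 : Z) : Z :=
  ((n1 + n2 + n3) ^ 3 - n1 ^ 3 - n2 ^ 3 - n3 ^ 3)%Z.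

Fixpoint inJ (t : ltree) : Prop :=
  match t with
  | LLeaf _ => True
  | LNode z a b c =>
      z = (lab a + lab b + lab c)%Z /\
      ((lab a <> z /\ lab b <> z /\ lab c <> z) \/
       (lab a = z /\ lab b = (- z)%Z /\ lab c = z)) /\
      inJ a /\ inJ b /\ inJ c
  end.

Definition jbr (x : R) : R := sqrt (1 + x ^ 2).

Fixpoint sigma_weight (t : ltree) : R :=
  match t with
  | LLeaf _ => 1
  | LNode _ a b c =>
      / sqrt (jbr (IZR (sigma (lab a) (lab b) (lab c))))
      * sigma_weight a * sigma_weight b * sigma_weight c
  end.

Definition Cx := (R * R)%type.
Definition Cmul (x y : Cx) : Cx :=
  (fst x * fst y - snd x * snd y, fst x * snd y + snd x * fst y).
Definition Cexpi (th : R) : Cx := (cos th, sin th).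
Definition Cmod (x : Cx) : R := sqrt (fst x ^ 2 + snd x ^ 2).

(** Total version of the Riemann integral: the Riemann integral of f over [a,b]
    when f is Riemann integrable there (its value does not depend on the
    integrability proof), and 0 otherwise (never used: all integrands below
    are continuous). *)
Definition Rint (f : R -> R) (a b : R) : R :=
  match excluded_middle_informative
          (exists pr : Riemann_integrable f a b, True) with
  | left h => RiemannInt (proj1_sig (constructive_indefinite_description _ h))
  | right _ => 0
  end.

Definition Cint (f : R -> Cx) (a b : R) : Cx :=
  (Rint (fun s => fst (f s)) a b, Rint (fun s => snd (f s)) a b).

(** I_T(t,j) = int_{R(T,t)} prod_{v in T^0} e^{i sigma(j,v) s_v} ds, computed
    as the iterated integral over the region
    R(T,t) = {0 <= s_v <= s_w <= t whenever v < w}: integrating first over the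
    root variable s_r in [0,t], the remaining region is the product of the
    regions R(T_{r_i}, s_r) of the three subtrees, so
    I_T(t,j) = int_0^t e^{i sigma(j,r) s} prod_i I_{T_{r_i}}(s,j) ds,
    with I = 1 for the tree with no non-terminal node (empty integral). *)
Fixpoint I_T (t : ltree) (tt : R) : Cx :=
  match t with
  | LLeaf _ => (1, 0)
  | LNode _ a b c =>
      Cint (fun s => Cmul (Cexpi (IZR (sigma (lab a) (lab b) (lab c)) * s))
                          (Cmul (I_T a s) (Cmul (I_T b s) (I_T c s))))
           0 tt
  end.

(* Main.v *)
Require Import Defs.
From Stdlib Require Import Reals ZArith Lra Lia ClassicalEpsilon FunctionalExtensionality.
From Coquelicot Require Import Coquelicot.
Import Defs.
Open Scope R_scope.

Lemma Rint_RInt f a b : ex_RInt f a b -> Rint f a b = RInt f a b.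
Proof.
  intros H. unfold Rint.
  destruct excluded_middle_informative as [h|h].
  - simpl.
    symmetry; apply RInt_Reals.
  - exfalso; apply h. exists (ex_RInt_Reals_0 _ _ _ H). trivial.
Qed.

Definition ccont (f : R -> R) := forall x, continuous f x.

Lemma cc_mult f g : ccont f -> ccont g -> ccont (fun s => f s * g s).
Proof. intros Hf Hg x. apply (continuous_mult f g). apply Hf. apply Hg. Qed.
Lemma cc_minus f g : ccont f -> ccont g -> ccont (fun s => f s - g s).
Proof. intros Hf Hg x. apply (continuous_minus f g). apply Hf. apply Hg. Qed.
Lemma cc_plus f g : ccont f -> ccont g -> ccont (fun s => f s + g s).
Proof. intros Hf Hg x. apply (continuous_plus f g). apply Hf. apply Hg. Qed.
Lemma cc_const c : ccont (fun _ => c).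
Proof. intros x. apply continuous_const. Qed.
Lemma cc_cos a : ccont (fun s => cos (a * s)).
Proof. intros x. apply continuous_cos_comp. apply (continuous_mult (fun _ => a) (fun s => s)).
  apply continuous_const. apply continuous_id. Qed.
Lemma cc_sin a : ccont (fun s => sin (a * s)).
Proof. intros x. apply continuous_sin_comp. apply (continuous_mult (fun _ => a) (fun s => s)).
  apply continuous_const. apply continuous_id. Qed.

Lemma cc_RInt f : ccont f -> ccont (fun t => RInt f 0 t).
Proof.
  intros Hf x. apply (ex_derive_continuous (K:=R_AbsRing) (V:=R_NormedModule)). exists (f x).
  apply (is_derive_RInt f (fun t => RInt f 0 t) 0 x).
  - apply filter_forall. intros y. apply (RInt_correct (V:=R_CompleteNormedModule)). apply (ex_RInt_continuous (V:=R_CompleteNormedModule)). intros; apply Hf.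
  - apply Hf.
Qed.

Definition Ccont (f : R -> Cx) := ccont (fun s => fst (f s)) /\ ccont (fun s => snd (f s)).

Lemma Cc_mul f g : Ccont f -> Ccont g -> Ccont (fun s => Cmul (f s) (g s)).
Proof.
  intros [f1 f2] [g1 g2]; unfold Cmul; split; simpl.
  - apply cc_minus; apply cc_mult; auto.
  - apply cc_plus; apply cc_mult; auto.
Qed.

Lemma Cc_exp a : Ccont (fun s => Cexpi (a * s)).
Proof. split; simpl. apply cc_cos. apply cc_sin. Qed.

Lemma Cint_RInt f t : Ccont f -> Cint f 0 t = (RInt (fun s => fst (f s)) 0 t, RInt (fun s => snd (f s)) 0 t).
Proof.
  intros [H1 H2]. unfold Cint. rewrite !Rint_RInt; auto;
  apply (ex_RInt_continuous (V:=R_CompleteNormedModule)); intros; auto.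
Qed.

Lemma I_cont T : Ccont (I_T T).
Proof.
  induction T as [z|z a IHa b IHb c IHc]; simpl.
  - split; apply cc_const.
  - assert (HC : Ccont (fun s => Cmul (Cexpi (IZR (sigma (lab a) (lab b) (lab c)) * s))
                          (Cmul (I_T a s) (Cmul (I_T b s) (I_T c s))))).
    { apply Cc_mul. apply Cc_exp. apply Cc_mul; auto. apply Cc_mul; auto. }
    assert (E : forall t, Cint (fun s => Cmul (Cexpi (IZR (sigma (lab a) (lab b) (lab c)) * s))
                          (Cmul (I_T a s) (Cmul (I_T b s) (I_T c s)))) 0 t = 
       (RInt (fun s => fst (Cmul (Cexpi (IZR (sigma (lab a) (lab b) (lab c)) * s))
                          (Cmul (I_T a s) (Cmul (I_T b s) (I_T c s))))) 0 t,
        RInt (fun s => snd (Cmul (Cexpi (IZR (sigma (lab a) (lab b) (lab c)) * s))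
                          (Cmul (I_T a s) (Cmul (I_T b s) (I_T c s))))) 0 t)).
    { intros; apply Cint_RInt; auto. }
    destruct HC as [H1 H2].
    split; intros x; eapply continuous_ext; try (intros t; rewrite E; reflexivity); simpl.
    + apply cc_RInt; auto.
    + apply cc_RInt; auto.
Qed.

Definition Csub (x y : Cx) : Cx := (fst x - fst y, snd x - snd y).
Definition Cadd (x y : Cx) : Cx := (fst x + fst y, snd x + snd y).

Lemma Cmod_mul x y : Cmod (Cmul x y) = Cmod x * Cmod y.
Proof. exact (Complex.Cmod_mult x y). Qed.
Lemma Cmod_add x y : Cmod (Cadd x y) <= Cmod x + Cmod y.
Proof. exact (Complex.Cmod_triangle x y). Qed.
Lemma Cmod_pos x : 0 <= Cmod x.
Proof. exact (Complex.Cmod_ge_0 x). Qed.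
Lemma Cmod_expi th : Cmod (Cexpi th) = 1.
Proof. unfold Cmod, Cexpi; simpl. transitivity (sqrt 1); [|apply sqrt_1]. f_equal. pose proof (sin2_cos2 th) as H. unfold Rsqr in H. lra. Qed.
Lemma Cmod_fst x : Rabs (fst x) <= Cmod x.
Proof. unfold Cmod. rewrite <- sqrt_Rsqr_abs. apply sqrt_le_1_alt. unfold Rsqr. nra. Qed.
Lemma Cmod_snd x : Rabs (snd x) <= Cmod x.
Proof. unfold Cmod. rewrite <- sqrt_Rsqr_abs. apply sqrt_le_1_alt. unfold Rsqr. nra. Qed.
Lemma Cmod_le_sum x : Cmod x <= Rabs (fst x) + Rabs (snd x).
Proof.
  unfold Cmod. apply Rsqr_incr_0_var.
  - rewrite Rsqr_sqrt. 2: nra. unfold Rsqr. 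
    pose proof (Rabs_pos (fst x)). pose proof (Rabs_pos (snd x)).
    rewrite <- (pow2_abs (fst x)). rewrite <- (pow2_abs (snd x)). nra.
  - pose proof (Rabs_pos (fst x)). pose proof (Rabs_pos (snd x)). lra.
Qed.
Lemma Cmod_sub0 x : Cmod (Csub x x) = 0.
Proof. unfold Cmod, Csub; simpl. replace (fst x - fst x) with 0 by ring. replace (snd x - snd x) with 0 by ring.
  transitivity (sqrt 0); [f_equal; ring | apply sqrt_0]. Qed.

Lemma exR f a b : ccont f -> ex_RInt f a b.
Proof. intros H. apply (ex_RInt_continuous (V:=R_CompleteNormedModule)). intros; apply H. Qed.

Lemma RInt_chasles f a b c : ccont f -> RInt f a b + RInt f b c = RInt f a c.
Proof. intros H. apply (RInt_Chasles (V:=R_CompleteNormedModule)); apply exR; auto. Qed.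

Lemma RInt_diff f a b : ccont f -> RInt f 0 b - RInt f 0 a = RInt f a b.
Proof. intros H. rewrite <- (RInt_chasles f 0 a b H). ring. Qed.

Lemma RInt_shift G p a b : ccont G -> RInt (fun y => G (y + p)) a b = RInt G (a + p) (b + p).
Proof.
  intros H.
  replace (a + p) with (1 * a + p) by ring. replace (b + p) with (1 * b + p) by ring.
  rewrite <- (RInt_comp_lin (V:=R_CompleteNormedModule) G 1 p a b).
  2: { apply exR; auto. }
  - apply RInt_ext. intros x _. simpl. rewrite Rmult_1_l. unfold scal; simpl. unfold mult; simpl. rewrite Rmult_1_l. reflexivity.
Qed.

Lemma ccont_shift G p : ccont G -> ccont (fun y => G (y + p)).
Proof. intros H x. apply (continuous_comp (fun y => y + p) G). 
  apply (continuous_plus (fun y => y) (fun _ => p)). apply continuous_id. apply continuous_const.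
  apply H. Qed.

Lemma RInt_fold G s s' p : ccont G ->
  2 * RInt G s s' = RInt (fun u => G u + G (u+p)) s (s'-p) + RInt G s (s+p) + RInt G (s'-p) s'.
Proof.
  intros H.
  rewrite (RInt_plus (V:=R_CompleteNormedModule) G (fun u => G (u+p))); try apply exR; auto.
  2: apply ccont_shift; auto.
  simpl. unfold plus; simpl.
  rewrite RInt_shift; auto.
  replace (s' - p + p) with s' by ring.
  pose proof (RInt_chasles G s (s'-p) s' H). pose proof (RInt_chasles G s (s+p) s' H). lra.
Qed.

Lemma RInt_bd G a b M : ccont G -> a <= b -> (forall u, a <= u <= b -> Rabs (G u) <= M) ->
  Rabs (RInt G a b) <= (b - a) * M.
Proof. intros H hab HM. apply abs_RInt_le_const; auto. apply exR; auto. Qed.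

Lemma comp_bd G s s' p M K : ccont G -> 0 < p -> s + 2*p <= s' ->
  (forall u, s <= u <= s' -> Rabs (G u) <= M) ->
  (forall u, s <= u -> u + p <= s' -> Rabs (G u + G (u+p)) <= K) ->
  Rabs (RInt G s s') <= ((s' - s - p) * K + 2 * p * M) / 2.
Proof.
  intros H hp hs HM HK.
  assert (E := RInt_fold G s s' p H).
  assert (B1 : Rabs (RInt (fun u => G u + G (u+p)) s (s'-p)) <= (s' - p - s) * K).
  { apply RInt_bd. apply cc_plus; auto. apply ccont_shift; auto. lra. intros u hu. apply HK; lra. }
  assert (B2 : Rabs (RInt G s (s+p)) <= (s + p - s) * M).
  { apply RInt_bd; auto. lra. intros u hu. apply HM; lra. }
  assert (B3 : Rabs (RInt G (s'-p) s') <= (s' - (s'-p)) * M).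
  { apply RInt_bd; auto. lra. intros u hu. apply HM; lra. }
  assert (Rabs (2 * RInt G s s') <= (s' - p - s) * K + (s + p - s) * M + (s' - (s'-p)) * M).
  { rewrite E. eapply Rle_trans. apply Rabs_triang. eapply Rle_trans. apply Rplus_le_compat_r. apply Rabs_triang. lra. }
  rewrite Rabs_mult, Rabs_right in H0 by lra. lra.
Qed.

Definition wt (S : R) := / sqrt (jbr S).

Lemma jbr_facts S : 0 < jbr S /\ jbr S * jbr S = 1 + S^2.
Proof. unfold jbr. split. apply sqrt_lt_R0. nra. apply sqrt_sqrt. nra. Qed.

Lemma wt_pos S : 0 < wt S.
Proof. unfold wt. apply Rinv_0_lt_compat. apply sqrt_lt_R0. apply jbr_facts. Qed.

Lemma sq_le x y : 0 <= x -> 0 <= y -> x * x <= y * y -> x <= y.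
Proof. intros. nra. Qed.

Lemma N1 S h : 0 <= h <= 1 -> h * Rabs S <= 2 * PI -> sqrt h <= 7 * wt S.
Proof.
  intros Hh HS. destruct (jbr_facts S) as [r0 r2].
  set (r := jbr S) in *. unfold wt. fold r.
  assert (q0 : 0 < sqrt r) by (apply sqrt_lt_R0; auto).
  assert (q2 : sqrt r * sqrt r = r) by (apply sqrt_sqrt; lra).
  assert (h2 : sqrt h * sqrt h = h) by (apply sqrt_sqrt; lra).
  assert (h0 : 0 <= sqrt h) by apply sqrt_pos.
  apply (Rmult_le_reg_r (sqrt r)); auto.
  replace (7 * / sqrt r * sqrt r) with 7 by (field; lra).
  apply sq_le. nra. lra.
  replace (sqrt h * sqrt r * (sqrt h * sqrt r)) with (h * r) by (transitivity ((sqrt h * sqrt h) * (sqrt r * sqrt r)); [rewrite h2, q2; ring| ring]).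
  apply sq_le. nra. lra.
  replace (h * r * (h * r)) with (h*h*(1+S^2)) by (rewrite <- r2; ring).
  assert (PI <= 4) by apply PI_4. pose proof (Rabs_pos S).
  assert (h*h*S^2 = (h * Rabs S) * (h * Rabs S)) by (rewrite <- (pow2_abs S); ring).
  assert (0 <= h * Rabs S) by (apply Rmult_le_pos; lra). assert (h * Rabs S <= 8) by lra.
  assert (h * Rabs S * (h * Rabs S) <= 64) by nra.
  assert (h * h <= 1) by nra. nra.
Qed.

Lemma N2 S : 1 <= Rabs S -> sqrt (PI / Rabs S) <= 3 * wt S.
Proof.
  intros HS. destruct (jbr_facts S) as [r0 r2].
  set (r := jbr S) in *. unfold wt. fold r.
  assert (q0 : 0 < sqrt r) by (apply sqrt_lt_R0; auto).
  assert (q2 : sqrt r * sqrt r = r) by (apply sqrt_sqrt; lra).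
  assert (PI <= 4) by apply PI_4. assert (PI > 0) by apply PI_RGT_0.
  set (p := PI / Rabs S).
  assert (p0 : 0 <= p) by (unfold p; apply Rmult_le_pos; [lra| apply Rlt_le, Rinv_0_lt_compat; lra]).
  assert (pS : p * Rabs S = PI) by (unfold p; field; lra).
  assert (h2 : sqrt p * sqrt p = p) by (apply sqrt_sqrt; lra).
  assert (h0 : 0 <= sqrt p) by apply sqrt_pos.
  apply (Rmult_le_reg_r (sqrt r)); auto.
  replace (3 * / sqrt r * sqrt r) with 3 by (field; lra).
  apply sq_le. nra. lra.
  replace (sqrt p * sqrt r * (sqrt p * sqrt r)) with (p * r) by (transitivity ((sqrt p * sqrt p) * (sqrt r * sqrt r)); [rewrite h2, q2; ring| ring]).
  apply sq_le. nra. lra.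
  replace (p * r * (p * r)) with (p*p*(1+S^2)) by (rewrite <- r2; ring).
  assert (S^2 = Rabs S * Rabs S) by (rewrite <- (pow2_abs S); ring).
  assert (p <= PI) by nra. assert (p * p * (1 + S^2) = p*p + (p*Rabs S)*(p*Rabs S)) by (rewrite H1; ring).
  assert (p * p * (1 + S^2) <= 2 * PI * PI). { rewrite H3, pS. nra. }
  nra.
Qed.

Lemma expi_shift S u : 1 <= Rabs S -> Cexpi (S * (u + PI / Rabs S)) = (- cos (S*u), - sin (S*u)).
Proof.
  intros HS. unfold Cexpi. unfold Rabs in *. destruct (Rcase_abs S) as [Hn|Hp].
  - replace (S * (u + PI / - S)) with (S*u - PI) by (field; lra).
    pose proof (neg_cos (S*u - PI)) as A. pose proof (neg_sin (S*u - PI)) as B.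
    replace (S*u - PI + PI) with (S*u) in A, B by ring. f_equal; lra.
  - replace (S * (u + PI / S)) with (S*u + PI) by (field; lra).
    rewrite neg_cos, neg_sin. reflexivity.
Qed.

Lemma Cmod_sub_sym x y : Cmod (Csub x y) = Cmod (Csub y x).
Proof. unfold Cmod, Csub; simpl. f_equal. ring. Qed.

Lemma comp_core (k : Cx -> R) F S s s' M K :
  (forall z, Rabs (k z) <= Cmod z) ->
  (forall a b x y, k (Cmul (a,b) x) + k (Cmul (-a,-b) y) = k (Cmul (a,b) (Csub x y))) ->
  ccont (fun u => k (Cmul (Cexpi (S*u)) (F u))) ->
  (S = 0 \/ 1 <= Rabs S) -> 0 <= s <= s' -> s' - s <= 1 -> 0 <= M -> 0 <= K ->
  (forall u, s <= u <= s' -> Cmod (F u) <= M) ->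
  (forall u q, 0 <= q -> s <= u -> u + q <= s' -> Cmod (Csub (F (u+q)) (F u)) <= K * sqrt q) ->
  Rabs (RInt (fun u => k (Cmul (Cexpi (S*u)) (F u))) s s')
    <= 7 * wt S * sqrt (s'-s) * (M + sqrt (s'-s) * K).
Proof.
  intros Hk1 Hk2 Hc HS Hs Hh HM0 HK0 HM HK.
  set (G := fun u => k (Cmul (Cexpi (S*u)) (F u))).
  assert (HG : forall u, s <= u <= s' -> Rabs (G u) <= M).
  { intros u hu. unfold G. eapply Rle_trans. apply Hk1. rewrite Cmod_mul, Cmod_expi, Rmult_1_l. auto. }
  set (h := s' - s).
  assert (w0 := wt_pos S).
  assert (sh0 : 0 <= sqrt h) by apply sqrt_pos.
  assert (sh2 : sqrt h * sqrt h = h) by (apply sqrt_sqrt; unfold h; lra).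
  destruct (Rle_lt_dec (h * Rabs S) (2*PI)) as [HA|HB].
  - eapply Rle_trans. apply RInt_bd; auto. lra. fold h.
    assert (sqrt h <= 7 * wt S) by (apply N1; unfold h in *; lra).
    assert (h * M <= 7 * wt S * sqrt h * M).
    { assert (sqrt h * sqrt h * M <= sqrt h * (7 * wt S) * M)
        by (apply Rmult_le_compat_r; auto; apply Rmult_le_compat_l; auto).
      rewrite sh2 in H0. lra. }
    assert (0 <= 7 * wt S * sqrt h * (sqrt h * K)).
    { repeat apply Rmult_le_pos; lra. }
    nra.
  - assert (S1 : 1 <= Rabs S).
    { destruct HS as [HS|HS]; auto. rewrite HS, Rabs_R0 in HB. pose proof PI_RGT_0. lra. }
    assert (PI > 0) by apply PI_RGT_0.
    set (p := PI / Rabs S).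
    assert (p0 : 0 < p) by (unfold p; apply Rdiv_lt_0_compat; lra).
    assert (pS : p * Rabs S = PI) by (unfold p; field; lra).
    assert (p2 : 2 * p < h) by nra.
    assert (sp0 : 0 <= sqrt p) by apply sqrt_pos.
    assert (sp2 : sqrt p * sqrt p = p) by (apply sqrt_sqrt; lra).
    assert (N := N2 S S1). fold p in N.
    eapply Rle_trans. apply (comp_bd G s s' p M (K * sqrt p)); auto.
    + unfold h in p2; lra.
    + intros u hu1 hu2. unfold G. unfold p. rewrite expi_shift by auto.
      unfold Cexpi. rewrite Hk2. eapply Rle_trans. apply Hk1.
      rewrite Cmod_mul. 
      assert (E1 : Cmod (cos (S * u), sin (S * u)) = 1) by apply Cmod_expi. rewrite E1, Rmult_1_l.
      fold p. rewrite Cmod_sub_sym. apply HK; lra.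
    + fold h.
      assert (A1 : (h - p) * (K * sqrt p) <= sqrt h * sqrt h * K * (3 * wt S)).
      { rewrite sh2. assert (K * sqrt p <= K * (3 * wt S)) by (apply Rmult_le_compat_l; auto). assert (0 <= K * sqrt p) by (apply Rmult_le_pos; lra).
        assert ((h - p) * (K * sqrt p) <= h * (K * sqrt p)) by nra.
        assert (h * (K * sqrt p) <= h * (K * (3 * wt S))) by (apply Rmult_le_compat_l; lra). nra. }
      assert (A2 : p <= sqrt p * sqrt h).
      { rewrite <- sp2 at 1. apply Rmult_le_compat_l; auto. apply sqrt_le_1_alt. lra. }
      assert (A3 : 2 * p * M <= 2 * (3 * wt S) * sqrt h * M).
      { assert (p <= 3 * wt S * sqrt h) by (eapply Rle_trans; [apply A2| apply Rmult_le_compat_r; auto]). nra. }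
      assert (0 <= wt S * sqrt h * sqrt h * K) by (repeat apply Rmult_le_pos; lra).
      assert (0 <= wt S * sqrt h * M) by (repeat apply Rmult_le_pos; lra).
      nra.
Qed.

Lemma core F S s s' M K : Ccont F ->
  (S = 0 \/ 1 <= Rabs S) -> 0 <= s <= s' -> s' - s <= 1 -> 0 <= M -> 0 <= K ->
  (forall u, s <= u <= s' -> Cmod (F u) <= M) ->
  (forall u q, 0 <= q -> s <= u -> u + q <= s' -> Cmod (Csub (F (u+q)) (F u)) <= K * sqrt q) ->
  Cmod (RInt (fun u => fst (Cmul (Cexpi (S*u)) (F u))) s s',
        RInt (fun u => snd (Cmul (Cexpi (S*u)) (F u))) s s')
    <= 14 * wt S * sqrt (s'-s) * (M + sqrt (s'-s) * K).
Proof.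
  intros HF HS Hs Hh HM0 HK0 HM HK.
  assert (Hg : Ccont (fun u => Cmul (Cexpi (S*u)) (F u))) by (apply Cc_mul; [apply Cc_exp | auto]).
  destruct Hg as [G1 G2].
  eapply Rle_trans. apply Cmod_le_sum. cbn [fst snd].
  assert (B1 := comp_core fst F S s s' M K Cmod_fst).
  assert (B2 := comp_core snd F S s s' M K Cmod_snd).
  assert (X1 : Rabs (RInt (fun u => fst (Cmul (Cexpi (S*u)) (F u))) s s')
    <= 7 * wt S * sqrt (s'-s) * (M + sqrt (s'-s) * K)).
  { apply B1; auto. intros a b x y. unfold Cmul, Csub; simpl. ring. }
  assert (X2 : Rabs (RInt (fun u => snd (Cmul (Cexpi (S*u)) (F u))) s s')
    <= 7 * wt S * sqrt (s'-s) * (M + sqrt (s'-s) * K)).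
  { apply B2; auto. intros a b x y. unfold Cmul, Csub; simpl. ring. }
  lra.
Qed.

Definition D : R := 56.

Definition Inv (T : ltree) : Prop :=
  (n_int T = 0%nat -> forall u v, I_T T u = I_T T v) /\
  (forall s s', 0 <= s <= s' -> s' <= 1 -> (1 <= n_int T)%nat ->
     Cmod (Csub (I_T T s') (I_T T s)) <= D^(n_int T) * sqrt (s'-s) * sqrt s' ^ (pred (n_int T)) * sigma_weight T) /\
  (forall s, 0 <= s <= 1 -> Cmod (I_T T s) <= D^(n_int T) * sqrt s ^ (n_int T) * sigma_weight T) /\
  0 < sigma_weight T.

Lemma D_pos : 0 < D. Proof. unfold D; lra. Qed.

Lemma term3 A B C na nb nc Wa Wb Wc r q : 0 <= A -> 0 <= B -> 0 <= C -> 0 <= r -> 0 <= q ->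
  0 < Wa -> 0 < Wb -> 0 < Wc ->
  (na = 0%nat -> A = 0) -> ((1 <= na)%nat -> A <= D^na * sqrt q * r^(pred na) * Wa) ->
  B <= D^nb * r^nb * Wb -> C <= D^nc * r^nc * Wc ->
  A * B * C <= D^(na+nb+nc) * r^(pred (na+nb+nc)) * (Wa*Wb*Wc) * sqrt q.
Proof.
  intros A0 B0 C0 r0 q0 Wa0 Wb0 Wc0 HA0 HA HB HC.
  assert (D0 := D_pos).
  assert (0 <= D^(na+nb+nc) * r^(pred (na+nb+nc)) * (Wa*Wb*Wc) * sqrt q).
  { pose proof (sqrt_pos q). repeat apply Rmult_le_pos; try apply pow_le; lra. }
  destruct na as [|na].
  - rewrite HA0 by reflexivity. lra.
  - assert (HA' := HA ltac:(lia)). simpl pred in *.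
    replace (pred (S na + nb + nc)) with (na + nb + nc)%nat by lia.
    eapply Rle_trans.
    { apply Rmult_le_compat; [nra|lra| |apply HC].
      apply Rmult_le_compat; [lra|lra|apply HA'|apply HB]. }
    rewrite !pow_add. simpl. right. ring.
Qed.

Lemma inv_val x v s' : Inv x -> 0 <= v <= s' -> s' <= 1 ->
  Cmod (I_T x v) <= D^(n_int x) * sqrt s' ^ (n_int x) * sigma_weight x.
Proof.
  intros [_ [_ [H3 H4]]] hv hs. eapply Rle_trans. apply H3; lra.
  apply Rmult_le_compat_r; [lra|]. apply Rmult_le_compat_l. apply pow_le. pose proof D_pos; lra.
  apply pow_incr. split. apply sqrt_pos. apply sqrt_le_1_alt. lra.
Qed.

Lemma inv_diff0 x u q : Inv x -> n_int x = 0%nat -> Cmod (Csub (I_T x (u+q)) (I_T x u)) = 0.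
Proof. intros [H1 _] h. rewrite (H1 h (u+q) u). apply Cmod_sub0. Qed.

Lemma inv_diff1 x u q s' : Inv x -> (1 <= n_int x)%nat -> 0 <= u -> 0 <= q -> u + q <= s' -> s' <= 1 ->
  Cmod (Csub (I_T x (u+q)) (I_T x u)) <= D^(n_int x) * sqrt q * sqrt s' ^ (pred (n_int x)) * sigma_weight x.
Proof.
  intros [_ [H2 [_ H4]]] hn hu hq hs hs1. eapply Rle_trans. apply H2; auto; lra.
  replace (u + q - u) with q by ring.
  apply Rmult_le_compat_r; [lra|]. apply Rmult_le_compat_l.
  apply Rmult_le_pos. apply pow_le. pose proof D_pos; lra. apply sqrt_pos.
  apply pow_incr. split. apply sqrt_pos. apply sqrt_le_1_alt. lra.
Qed.

Lemma prod_id x y z x' y' z' :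
  Csub (Cmul x' (Cmul y' z')) (Cmul x (Cmul y z)) =
  Cadd (Cmul (Csub x' x) (Cmul y' z')) (Cadd (Cmul (Csub y' y) (Cmul x z')) (Cmul (Csub z' z) (Cmul x y))).
Proof. unfold Csub, Cadd, Cmul; simpl. f_equal; ring. Qed.

Lemma prod_diff a b c s' u q :
  Inv a -> Inv b -> Inv c -> 0 <= u -> 0 <= q -> u + q <= s' -> s' <= 1 ->
  Cmod (Csub (Cmul (I_T a (u+q)) (Cmul (I_T b (u+q)) (I_T c (u+q))))
             (Cmul (I_T a u) (Cmul (I_T b u) (I_T c u))))
  <= (3 * D^(n_int a + n_int b + n_int c) * sqrt s' ^ (pred (n_int a + n_int b + n_int c))
       * (sigma_weight a * sigma_weight b * sigma_weight c)) * sqrt q.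
Proof.
  intros Ha Hb Hc hu hq hs hs1.
  rewrite prod_id.
  assert (Wa := proj2 (proj2 (proj2 Ha))). assert (Wb := proj2 (proj2 (proj2 Hb))).
  assert (Wc := proj2 (proj2 (proj2 Hc))).
  assert (r0 : 0 <= sqrt s') by apply sqrt_pos.
  set (R0 := D ^ (n_int a + n_int b + n_int c) * sqrt s' ^ pred (n_int a + n_int b + n_int c) *
     (sigma_weight a * sigma_weight b * sigma_weight c) * sqrt q).
  assert (T1 : Cmod (Cmul (Csub (I_T a (u + q)) (I_T a u)) (Cmul (I_T b (u + q)) (I_T c (u + q)))) <= R0).
  { rewrite !Cmod_mul. rewrite <- Rmult_assoc. unfold R0.
    apply term3; auto using Cmod_pos.
    - intros h; apply inv_diff0; auto.
    - intros h. apply (inv_diff1 a u q s'); auto.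
    - apply inv_val; auto; lra.
    - apply inv_val; auto; lra. }
  assert (T2 : Cmod (Cmul (Csub (I_T b (u + q)) (I_T b u)) (Cmul (I_T a u) (I_T c (u + q)))) <= R0).
  { rewrite !Cmod_mul. rewrite <- Rmult_assoc. unfold R0.
    replace (n_int a + n_int b + n_int c)%nat with (n_int b + n_int a + n_int c)%nat by lia.
    replace (sigma_weight a * sigma_weight b * sigma_weight c) with (sigma_weight b * sigma_weight a * sigma_weight c) by ring.
    apply term3; auto using Cmod_pos.
    - intros h; apply inv_diff0; auto.
    - intros h. apply (inv_diff1 b u q s'); auto.
    - apply inv_val; auto; lra.
    - apply inv_val; auto; lra. }
  assert (T3 : Cmod (Cmul (Csub (I_T c (u + q)) (I_T c u)) (Cmul (I_T a u) (I_T b u))) <= R0).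
  { rewrite !Cmod_mul. rewrite <- Rmult_assoc. unfold R0.
    replace (n_int a + n_int b + n_int c)%nat with (n_int c + n_int a + n_int b)%nat by lia.
    replace (sigma_weight a * sigma_weight b * sigma_weight c) with (sigma_weight c * sigma_weight a * sigma_weight b) by ring.
    apply term3; auto using Cmod_pos.
    - intros h; apply inv_diff0; auto.
    - intros h. apply (inv_diff1 c u q s'); auto.
    - apply inv_val; auto; lra.
    - apply inv_val; auto; lra. }
  eapply Rle_trans. apply Cmod_add. 
  assert (X := Cmod_add (Cmul (Csub (I_T b (u + q)) (I_T b u)) (Cmul (I_T a u) (I_T c (u + q))))
                      (Cmul (Csub (I_T c (u + q)) (I_T c u)) (Cmul (I_T a u) (I_T b u)))).
  unfold R0 in *. lra.
Qed.

Lemma sigma_cases z : IZR z = 0 \/ 1 <= Rabs (IZR z).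
Proof.
  destruct (Z.eq_dec z 0) as [->|h]. left; reflexivity.
  right. rewrite <- abs_IZR. apply IZR_le. lia.
Qed.

Lemma inv_node z a b c : Inv a -> Inv b -> Inv c -> Inv (LNode z a b c).
Proof.
  intros Ha Hb Hc.
  assert (Wa := proj2 (proj2 (proj2 Ha))). assert (Wb := proj2 (proj2 (proj2 Hb))).
  assert (Wc := proj2 (proj2 (proj2 Hc))).
  assert (D0 := D_pos).
  set (Sg := IZR (sigma (lab a) (lab b) (lab c))).
  set (F := fun u => Cmul (I_T a u) (Cmul (I_T b u) (I_T c u))).
  set (m := (n_int a + n_int b + n_int c)%nat).
  set (W := sigma_weight a * sigma_weight b * sigma_weight c).
  assert (W0 : 0 < W) by (unfold W; repeat apply Rmult_lt_0_compat; auto).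
  assert (HF : Ccont F) by (unfold F; apply Cc_mul; [apply I_cont| apply Cc_mul; apply I_cont]).
  assert (Hg : Ccont (fun u => Cmul (Cexpi (Sg*u)) (F u))) by (apply Cc_mul; [apply Cc_exp | auto]).
  assert (EI : forall t, I_T (LNode z a b c) t =
     (RInt (fun u => fst (Cmul (Cexpi (Sg*u)) (F u))) 0 t, RInt (fun u => snd (Cmul (Cexpi (Sg*u)) (F u))) 0 t)).
  { intros t. simpl. apply Cint_RInt. exact Hg. }
  assert (EW : sigma_weight (LNode z a b c) = wt Sg * W).
  { simpl. unfold wt, W, Sg. ring. }
  assert (En : n_int (LNode z a b c) = S m) by reflexivity.
  assert (Key : forall s s', 0 <= s <= s' -> s' <= 1 ->
     Cmod (Csub (I_T (LNode z a b c) s') (I_T (LNode z a b c) s)) <= D^(S m) * sqrt (s'-s) * sqrt s' ^ m * (wt Sg * W)).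
  { intros s s' hs hs1.
    rewrite !EI. unfold Csub; cbn [fst snd]. destruct Hg as [G1 G2].
    rewrite !RInt_diff by auto.
    assert (r0 : 0 <= sqrt s') by apply sqrt_pos.
    assert (M0 : 0 <= D^m * sqrt s' ^ m * W).
    { repeat apply Rmult_le_pos; try apply pow_le; lra. }
    assert (K0 : 0 <= 3 * D^m * sqrt s' ^ (pred m) * W).
    { repeat apply Rmult_le_pos; try apply pow_le; lra. }
    eapply Rle_trans. apply (core F Sg s s' (D^m * sqrt s' ^ m * W) (3 * D^m * sqrt s' ^ (pred m) * W)); auto.
    - apply sigma_cases.
    - lra.
    - intros u hu. unfold F. rewrite !Cmod_mul.
      assert (A := inv_val a u s' Ha ltac:(lra) hs1).
      assert (B := inv_val b u s' Hb ltac:(lra) hs1).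
      assert (C := inv_val c u s' Hc ltac:(lra) hs1).
      eapply Rle_trans.
      { apply Rmult_le_compat; [apply Cmod_pos| |apply A|].
        apply Rmult_le_pos; apply Cmod_pos.
        apply Rmult_le_compat; [apply Cmod_pos|apply Cmod_pos|apply B|apply C]. }
      unfold m, W. rewrite !pow_add. right; ring.
    - intros u q hq hu huq. unfold F. apply prod_diff; auto; lra.
    -
      set (h := s' - s).
      assert (sh0 : 0 <= sqrt h) by apply sqrt_pos.
      assert (Hk : sqrt h * (3 * D ^ m * sqrt s' ^ pred m * W) <= 3 * (D^m * sqrt s' ^ m * W)).
      { assert (sqrt h * sqrt s' ^ pred m <= sqrt s' ^ m).
        { destruct m as [|m'].
          - simpl. rewrite Rmult_1_r. rewrite <- sqrt_1. apply sqrt_le_1_alt. unfold h; lra.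
          - simpl pred. simpl. apply Rmult_le_compat_r. apply pow_le; lra. apply sqrt_le_1_alt. unfold h; lra. }
        assert (0 <= D^m * W) by (apply Rmult_le_pos; [apply pow_le|]; lra).
        replace (sqrt h * (3 * D ^ m * sqrt s' ^ pred m * W)) with (3 * (D^m * W) * (sqrt h * sqrt s' ^ pred m)) by ring.
        replace (3 * (D ^ m * sqrt s' ^ m * W)) with (3 * (D^m * W) * sqrt s' ^ m) by ring.
        apply Rmult_le_compat_l; lra. }
      assert (w0 := wt_pos Sg).
      assert (0 <= wt Sg * sqrt h) by (apply Rmult_le_pos; lra).
      replace (D ^ S m * sqrt h * sqrt s' ^ m * (wt Sg * W)) with
        (14 * wt Sg * sqrt h * (4 * (D^m * sqrt s' ^ m * W))) by (unfold D; simpl; ring).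
      apply Rmult_le_compat_l. 2: lra. apply Rmult_le_pos; lra. }
  split; [|split; [|split]].
  - rewrite En. discriminate.
  - intros s s' hs hs1 _. rewrite En, EW. simpl pred. apply Key; auto.
  - intros s hs. rewrite En, EW.
    assert (E0 : I_T (LNode z a b c) 0 = (0, 0)).
    { rewrite EI. rewrite !RInt_point. reflexivity. }
    assert (Cmod (I_T (LNode z a b c) s) = Cmod (Csub (I_T (LNode z a b c) s) (I_T (LNode z a b c) 0))).
    { rewrite E0. unfold Csub, Cmod. simpl. f_equal. ring. }
    rewrite H. eapply Rle_trans. apply Key; lra.
    replace (s - 0) with s by ring. simpl. right; ring.
  - rewrite EW. apply Rmult_lt_0_compat; auto. apply wt_pos.
Qed.

Lemma inv_all T : Inv T.
Proof.
  induction T as [z|z a IHa b IHb c IHc].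
  - split; [|split; [|split]].
    + intros _ u v; reflexivity.
    + intros s s' _ _ h. simpl in h. lia.
    + intros s _. simpl. unfold Cmod; simpl. right. replace (1 * (1*1) + 0 * (0 * 1)) with 1 by ring.
      rewrite sqrt_1. ring.
    + simpl; lra.
  - apply inv_node; auto.
Qed.

Theorem lemma3p2 :
  exists C : R,
    forall (T : ltree) (t : R),
      inJ T -> 0 <= t <= 1 ->
      Cmod (I_T T t) <= sqrt (C * t) ^ (n_int T) * sigma_weight T.
Proof.
  exists (D * D). intros T t _ ht.
  destruct (inv_all T) as [_ [_ [H3 _]]].
  eapply Rle_trans. apply H3; auto.
  rewrite sqrt_mult by (pose proof D_pos; nra).
  rewrite sqrt_square by (pose proof D_pos; lra).
  rewrite Rpow_mult_distr. right; ring.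
Qed.
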